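(* Let $X$ be a topological space, $\mathcal{F}$ a filter base on $X$ stable under countable intersections, and $K\subseteq X$ compact. If $\mathcal{F}\vee G_\delta(K):=\{F_0\cap F_1: F_0,F_1\in\mathcal{F}\cup G_\delta(K)\}$ is a filter base, then it is a total filter base stable under countable intersections.
   Context: A filter base on $X$ is a nonempty $\mathcal{F}\subseteq\mathcal{P}(X)$ with $\emptyset\notin\mathcal{F}$ and closed under pairwise intersections; it is stable under countable intersections if for every countable $S\subseteq\mathcal{F}$ there is $H\in\mathcal{F}$ with $H\subseteq\bigcap S$. $G_\delta(K)=\{G\subseteq X: K\subseteq G,\ G\text{ is a countable intersection of open subsets of }X\}$. $ad(\mathcal{F})=\bigcap\{\overline{F}:F\in\mathcal{F}\}$; $\mathcal{F}$ is total if every filter base $\mathcal{H}\supseteq\mathcal{F}$ satisfies $ad(\mathcal{H})\neq\emptyset$. *)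

(* Defs.v *)
From HB Require Import structures.
From mathcomp Require Import all_boot all_order.
From mathcomp Require Import all_classical topology.
Set Implicit Arguments. Unset Strict Implicit. Unset Printing Implicit Defensive.
Local Open Scope classical_set_scope.

Section Defs.
Context {X : topologicalType}.

Definition is_filter_base (F : set (set X)) : Prop :=
  F !=set0 /\ ~ F set0 /\ (forall A B, F A -> F B -> F (A `&` B)).

Definition countably_stable (F : set (set X)) : Prop :=
  forall S : set (set X), S `<=` F -> countable S ->
    exists H, F H /\ H `<=` \bigcap_(A in S) A.

Definition Gdelta (K : set X) : set (set X) :=
  [set G | K `<=` G /\
     exists U : set (set X), countable U /\ U `<=` open /\ G = \bigcap_(V in U) V].

Definition fjoin (F G : set (set X)) : set (set X) :=
  [set A | exists F0 F1, (F `|` G) F0 /\ (F `|` G) F1 /\ A = F0 `&` F1].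

Definition ad (F : set (set X)) : set X := \bigcap_(A in F) closure A.

Definition total_fbase (F : set (set X)) : Prop :=
  forall H : set (set X), is_filter_base H -> F `<=` H -> ad H !=set0.

End Defs.

(* Main.v *)
Require Import Defs.
From mathcomp Require Import all_boot all_order.
From mathcomp Require Import all_classical topology.
Local Open Scope classical_set_scope.

Lemma countableU2 T (A B : set T) : countable A -> countable B -> countable (A `|` B).
Proof.
move=> cA cB.
have -> : A `|` B = \bigcup_(b in [set: bool]) (if b then A else B).
  rewrite predeqE => x; split.
    by case=> ?; [exists true|exists false].
  by case=> -[] _ ?; [left|right].
apply: bigcup_countable; first exact: countableP.
by case.
Qed.

Lemma decomp (X : topologicalType) (F : set (set X)) (K : set X) A :
  is_filter_base F -> fjoin F (Gdelta K) A ->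
  exists P (U : set (set X)), F P /\ countable U /\ U `<=` open /\
    K `<=` \bigcap_(V in U) V /\ P `&` \bigcap_(V in U) V `<=` A.
Proof.
move=> [[P0 FP0] [_ FI]] [F0 [F1 [H0 [H1 ->]]]].
case: H0 => [FF0|[KF0 [U0 [cU0 [oU0 eU0]]]]];
case: H1 => [FF1|[KF1 [U1 [cU1 [oU1 eU1]]]]].
- exists (F0 `&` F1), set0; split; first exact: FI FF0 FF1.
  split; first exact: countable0.
  split; first by [].
  by rewrite bigcap_set0; split => // x [].
- exists F0, U1; split => //; split => //; split => //; split; first by rewrite -eU1.
  by rewrite -eU1.
- exists F1, U0; split => //; split => //; split => //; split; first by rewrite -eU0.
  by rewrite -eU0 setIC.
- exists P0, (U0 `|` U1); split => //; split; first exact: countableU2.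
  split; first by move=> V [/oU0|/oU1].
  rewrite bigcap_setU -eU0 -eU1; split; first by move=> x Kx; split; [apply: KF0|apply: KF1].
  by move=> x [].
Qed.

Theorem proposition2p2 (X : topologicalType) (F : set (set X)) (K : set X) :
  is_filter_base F -> countably_stable F -> compact K ->
  is_filter_base (fjoin F (Gdelta K)) ->
  total_fbase (fjoin F (Gdelta K)) /\ countably_stable (fjoin F (Gdelta K)).
Proof.
move=> fbF csF cK fbJ; split.
- move=> H [[A0 HA0] [H0 HI]] JH.
  pose D := [set B | exists U, open U /\ (exists A, H A /\ A `&` U = set0) /\ B = K `\` U].
  have FD : Filter (filter_from D id).
    apply: filter_from_filter.
      exists (K `\` set0); exists set0; split; first exact: open0.
      by split => //; exists A0; split => //; rewrite setI0.
    move=> _ _ [U1 [oU1 [[B1 [HB1 eB1]] ->]]] [U2 [oU2 [[B2 [HB2 eB2]] ->]]].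
    exists (K `\` (U1 `|` U2)).
      exists (U1 `|` U2); split; first exact: openU.
      split => //; exists (B1 `&` B2); split; first exact: HI.
      rewrite predeqE => x; split => // -[[b1 b2] [u1|u2]].
        by have : (B1 `&` U1) x by []; rewrite eB1.
      by have : (B2 `&` U2) x by []; rewrite eB2.
    by move=> x [Kx nU]; split; split => // ?; apply: nU; [left|right].
  have PD : ProperFilter (filter_from D id).
    apply: filter_from_proper => // _ [U [oU [[B [HB eB]] ->]]].
    apply/set0P/negP => /eqP KU.
    apply: H0.
    have JU : fjoin F (Gdelta K) U.
      exists U, U; split; first right.
        split; first by move=> x Kx; apply: contrapT => nU;
          have : (K `\` U) x by []; rewrite KU.
        exists [set U]; split; first exact: countable1.
        split; first by move=> V ->.
        by rewrite bigcap_set1.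
      split; last by rewrite setIid.
      right; split; first by move=> x Kx; apply: contrapT => nU;
          have : (K `\` U) x by []; rewrite KU.
      exists [set U]; split; first exact: countable1.
      split; first by move=> V ->.
      by rewrite bigcap_set1.
    by rewrite -eB; apply: HI => //; apply: JH.
  have [|x [Kx clx]] := cK _ PD.
    exists (K `\` set0); last by move=> y [].
    exists set0; split; first exact: open0.
    by split => //; exists A0; split => //; rewrite setI0.
  exists x => A HA B nB.
  apply: contrapT => nAB.
  have AB : A `&` B = set0 by rewrite predeqE => y; split => // hy; apply: nAB; exists y.
  move: nB; rewrite nbhsE => -[O [oO Ox] OB].
  have : (K `\` O) `&` O !=set0.
    apply: clx; last exact: open_nbhs_nbhs.
    exists (K `\` O) => //; exists O; split => //; split => //.
    exists A; split => //; rewrite predeqE => y; split => // -[Ay Oy].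
    have : (A `&` B) y by split => //; apply: OB.
    by rewrite AB.
  by case=> y [[_ nO] Oy].
- move=> S SJ cS.
  have : forall A, exists PU : set X * set (set X), S A ->
      F PU.1 /\ countable PU.2 /\ PU.2 `<=` open /\
      K `<=` \bigcap_(V in PU.2) V /\ PU.1 `&` \bigcap_(V in PU.2) V `<=` A.
    move=> A; have [SA|nSA] := pselect (S A).
      have [P [U h]] := @decomp _ F K A fbF (SJ _ SA).
      by exists (P, U).
    by exists (setT, set0).
  move=> /choice [d hd].
  have [H0 [FH0 sH0]] : exists H0, F H0 /\ H0 `<=` \bigcap_(A in (fun A => (d A).1) @` S) A.
    apply: csF.
      by move=> _ [A SA <-]; have [] := hd A SA.
    exact: card_le_trans (card_image_le _ _) cS.
  pose W := \bigcup_(A in S) (d A).2.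
  exists (H0 `&` \bigcap_(V in W) V); split.
    exists H0, (\bigcap_(V in W) V); split; first by left.
    split => //; right; split.
      move=> x Kx V [A SA dV].
      by have [_ [_ [_ [KA _]]]] := hd A SA; apply: KA.
    exists W; split.
      apply: bigcup_countable => // A SA.
      by have [_ []] := hd A SA.
    split => //; move=> V [A SA dV].
    by have [_ [_ [oA _]]] := hd A SA; apply: oA.
  move=> x [H0x Wx] A SA.
  have [_ [_ [_ [_ sub]]]] := hd A SA.
  apply: sub; split; first by apply: (sH0 _ H0x); exists A.
  move=> V dV; apply: (Wx V); exists A. exact SA. exact dV.
Qed.
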